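(* Let $G$ be a group of order $n$ with identity $e$ and let $S\subseteq G\setminus\{e\}$ with $|S|=n-2$. If $G$ has a rotational sequencing, then $G$ has an $S$-sequencing.
   Context: For $S\subseteq G\setminus\{e\}$ with $|S|=k$, an $S$-sequencing of $G$ is an ordering $(g_1,\dots,g_k)$ of the elements of $S$ such that the partial products $h_0=e$, $h_i=g_1\cdots g_i$ ($1\le i\le k$) are pairwise distinct. Let $(a_1,\dots,a_{n-1})$ be a cyclic arrangement of the non-identity elements of $G$ and set $b_i=a_i^{-1}a_{i+1}$ for $1\le i\le n-1$, indices taken modulo $n-1$ (so $b_{n-1}=a_{n-1}^{-1}a_1$). If $b_1,\dots,b_{n-1}$ are pairwise distinct, then $(b_1,\dots,b_{n-1})$ is called a rotational sequencing of $G$. *)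

(* Defs.v *)
From mathcomp Require Import all_boot all_fingroup.
Set Implicit Arguments. Unset Strict Implicit. Unset Printing Implicit Defensive.
Local Open Scope group_scope.

(* The group G is the whole finite group type gT; its identity is 1. *)

Definition partial_prods (gT : finGroupType) (s : seq gT) : seq gT :=
  1 :: scanl (fun h g => h * g) 1 s.

Definition is_S_sequencing (gT : finGroupType) (S : {set gT}) (s : seq gT) :=
  perm_eq s (enum S) && uniq (partial_prods s).

Definition has_S_sequencing (gT : finGroupType) (S : {set gT}) : Prop :=
  exists s : seq gT, is_S_sequencing S s.

(* For a cyclic arrangement a = (a_1,...,a_m), the sequence
   b_i = a_i^{-1} a_{i+1}, indices mod m (b_m = a_m^{-1} a_1). *)
Definition rot_quotients (gT : finGroupType) (a : seq gT) : seq gT :=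
  [seq p.1^-1 * p.2 | p <- zip a (rot 1 a)].

(* a is a cyclic arrangement of the non-identity elements of G whose
   quotient sequence b is pairwise distinct, i.e. b is a rotational sequencing. *)
Definition rotational_arrangement (gT : finGroupType) (a : seq gT) :=
  perm_eq a (enum [set: gT]^#) && uniq (rot_quotients a).

Definition has_rotational_sequencing (gT : finGroupType) : Prop :=
  exists a : seq gT, rotational_arrangement a.

(* Main.v *)
Require Import Defs.
From mathcomp Require Import all_boot all_fingroup.
Local Open Scope group_scope.

Section Aux.
Variable gT : finGroupType.
Definition fq (u v : gT) := u^-1 * v.

Lemma rq_pairmap (a0 : gT) a' :
  rot_quotients (a0 :: a') = pairmap fq a0 (rcons a' a0).
Proof.
rewrite /rot_quotients rot1_cons.
elim: a' a0 {2 4}a0 => [|z s IH] x y //=.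
by rewrite IH.
Qed.

Lemma size_rq (a : seq gT) : size (rot_quotients a) = size a.
Proof. by rewrite /rot_quotients size_map size_zip size_rot minnn. Qed.

Lemma rq_rot1 (a : seq gT) : rot_quotients (rot 1 a) = rot 1 (rot_quotients a).
Proof.
case: a => [|a0 [|a1 a'']] //.
rewrite rq_pairmap rot1_cons rcons_cons rq_pairmap /= rot1_cons.
by rewrite -[rcons (rcons _ _) _]cats1 pairmap_cat /= last_rcons cats1.
Qed.

Lemma rq_rot k (a : seq gT) : rot_quotients (rot k a) = rot k (rot_quotients a).
Proof.
elim: k => [|k IH]; first by rewrite !rot0.
case: (ltnP k (size a)) => hk.
  by rewrite (rotS hk) (@rotS _ k (rot_quotients a)) ?size_rq // rq_rot1 IH.
by rewrite !rot_oversize ?size_rq ?(leqW hk).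
Qed.

Lemma scan_pm (h c0 : gT) c' :
  scanl (fun h g => h * g) h (pairmap fq c0 c') = map (fun y => h * (c0^-1 * y)) c'.
Proof.
elim: c' h c0 => [|z t IH] h c0 //=.
rewrite IH; congr (_ :: _); apply: eq_map => y.
by rewrite /fq -!mulgA mulVKg.
Qed.

Lemma pm_no1 (x : gT) s : uniq (x :: s) -> 1 \notin pairmap fq x s.
Proof.
elim: s x => [|z t IH] x //= /andP[xn /andP[zn ut]].
rewrite in_cons negb_or IH ?andbT /= ?zn ?ut //.
rewrite eq_sym /fq -eq_mulVg1; apply: contraNneq xn => ->.
by rewrite mem_head.
Qed.
End Aux.

Theorem lemma4p2 (gT : finGroupType) (S : {set gT}) :
  1 \notin S -> #|S|.+2 = #|[set: gT]| ->
  has_rotational_sequencing gT -> has_S_sequencing S.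
Proof.
move=> S1 cardS [a /andP[pa ub]].
have ua : uniq a by rewrite (perm_uniq pa) enum_uniq.
have sza : size a = #|[set: gT]^#| by rewrite (perm_size pa) -cardE.
have cardD : #|[set: gT]^#| = #|S|.+1.
  by move: cardS; rewrite (cardsD1 1 [set: gT]) in_setT add1n => -[].
have sub : S \subset [set: gT]^#.
  apply/subsetP => y yS; rewrite !inE andbT.
  by apply: contraNneq S1 => <-.
case E0: #|S| => [|m].
  move/cards0_eq: E0 => ->; exists [::].
  by rewrite /is_S_sequencing enum_set0.
have : #|[set: gT]^# :\: S| == 1%N.
  by rewrite cardsD (setIidPr sub) cardD subSnn.
case/cards1P => x Hx.
have : x \in [set: gT]^# :\: S by rewrite Hx set11.
rewrite inE => /andP[xS xG].
have F1 : 1 \notin rot_quotients a.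
  case Ea: a ua sza => [|a0 a'] ua' sza'.
    by move: sza'; rewrite cardD E0.
  rewrite rq_pairmap -cats1 pairmap_cat mem_cat negb_or pm_no1 //=.
  rewrite in_cons orbF eq_sym /fq -eq_mulVg1.
  case: a' Ea ua' sza' => [|z t] Ea ua' sza'.
    by move: sza'; rewrite cardD E0.
  move: ua' => /= /andP[a0t _].
  apply: contraNneq a0t => <-.
  exact: mem_last.
set b := rot_quotients a in ub F1 *.
have bsub : {subset b <= enum ([set: gT]^#)}.
  move=> y yb; rewrite mem_enum !inE andbT.
  by apply: contraNneq F1 => <-.
have [_ F2] := uniq_min_size ub bsub
  (eq_leq (esym (etrans (size_rq _ a) (etrans sza (cardE _))))).
have xb : x \in b by rewrite F2 mem_enum.
set i := index x b.
have hi : i < size b by rewrite index_mem.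
have rb := rot_index xb.
set b' := drop i.+1 b ++ take i b in rb.
have rb1 : rot i.+1 b = rcons b' x by rewrite rotS // rb rot1_cons.
have ub1 : uniq (rcons b' x) by rewrite -rb1 rot_uniq.
move: (ub1); rewrite rcons_uniq => /andP[xb' ub'].
have hc := rq_rot _ i.+1 a.
rewrite -/b rb1 in hc.
have uc : uniq (rot i.+1 a) by rewrite rot_uniq.
case Ec: (rot i.+1 a) hc uc => [|c0 c'] hc uc.
  by move: hc; case: (b').
rewrite rq_pairmap -!cats1 pairmap_cat cats1 cats1 in hc.
move/rcons_inj: hc => [hs _].
exists b'; apply/andP; split.
  apply: uniq_perm => //; first exact: enum_uniq.
  move=> y; rewrite mem_enum.
  apply/idP/idP => hy.
    have yb : y \in b by rewrite -(mem_rot i.+1) rb1 mem_rcons in_cons hy orbT.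
    have : y \in [set: gT]^# :\: S = false.
      by rewrite Hx inE; apply: contraNF xb' => /eqP <-.
    have yG : y \in [set: gT]^# by rewrite -mem_enum -F2.
    by rewrite inE yG andbT => /negbFE.
  have yx : y != x by apply: contraNneq xS => <-.
  have : y \in rot i.+1 b by rewrite mem_rot F2 mem_enum (subsetP sub).
  by rewrite rb1 mem_rcons in_cons (negbTE yx).
rewrite /partial_prods -hs scan_pm.
have -> : 1 :: [seq 1 * (c0^-1 * y) | y <- c'] = map (fun y => c0^-1 * y) (c0 :: c').
  by rewrite /= mulVg; congr (_ :: _); apply: eq_map => y; rewrite mul1g.
by rewrite map_inj_uniq //; apply: mulgI.
Qed.
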